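(* Let $k\ge4$ be an integer, $\eta\in[\eta_{k+1},\eta_k)$, and $j\ge k$ an integer. Then $\Theta_j(\eta)>0$, where $\Theta_j(\eta)=(1-|a|^4)\sin\eta+|a|^{j+1}\sin(j\eta)$.
   Context: For $\eta\in(0,\pi/3)$ let $|a|=\frac{1}{2\cos\eta}$. For integers $k\ge1$ let $\Phi_k(\eta)=(1-|a|^4)\sin((k-1)\eta)-|a|^3\sin((k-2)\eta)+|a|^k\sin\eta$. For each integer $k\ge4$, $\Phi_k$ has a unique zero in $(\pi/k,\pi/(k-1))$, denoted $\eta_k$. *)

(* Defs.v *)
From Stdlib Require Import Reals.
Open Scope R_scope.

Definition absa (eta : R) : R := / (2 * cos eta).

Definition Phi (k : nat) (eta : R) : R :=
  (1 - absa eta ^ 4) * sin ((INR k - 1) * eta)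
  - absa eta ^ 3 * sin ((INR k - 2) * eta)
  + absa eta ^ k * sin eta.

Definition Theta (j : nat) (eta : R) : R :=
  (1 - absa eta ^ 4) * sin eta + absa eta ^ (j + 1) * sin (INR j * eta).

(* Main.v *)
Require Import Defs.
From Stdlib Require Import Reals Lra Lia Psatz.
Open Scope R_scope.
Lemma nb_aux b : 0 <= b -> b^2 <= /2 -> forall m,
  INR (m+5) * b^(m+5) <= 1 /\ INR (m+6) * b^(m+6) <= 1.
Proof.
  intros hb hb2. induction m as [|m [IH1 IH2]].
  - simpl. split.
    + assert (b <= 3/4) by nra.
      assert (b^4 <= 1/4). { replace (b^4) with ((b^2)^2) by ring. nra. }
      replace (b*(b*(b*(b*(b*1))))) with (b^4*b) by ring. nra.
    + replace (b*(b*(b*(b*(b*(b*1)))))) with ((b^2)^3) by ring.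
      assert (0 <= b^2) by nra.
      assert ((b^2)^3 <= (/2)^3). { apply pow_incr; lra. } lra.
  - split; [replace (S m + 5)%nat with (m+6)%nat by lia; exact IH2|].
    replace (S m + 6)%nat with (m+5+2)%nat by lia.
    rewrite pow_add. rewrite plus_INR. rewrite plus_INR in IH1.
    assert (0 <= INR m) by apply pos_INR.
    assert (0 <= b^(m+5)) by (apply pow_le; lra).
    assert (e5 : INR 5 = 5) by (simpl; lra). assert (e2 : INR 2 = 2) by (simpl; lra).
    rewrite e5 in IH1. rewrite plus_INR, e5, e2.
    assert (0 <= b^2) by nra.
    assert ((INR m + 5 + 2) * b^2 <= INR m + 5) by nra.
    nra.
Qed.

Lemma nb n b : (5 <= n)%nat -> 0 <= b -> b^2 <= /2 -> INR n * b^n <= 1.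
Proof.
  intros hn hb hb2. replace n with ((n-5)+5)%nat by lia.
  apply (nb_aux b hb hb2 (n-5)).
Qed.

Lemma sin_lower x : 0 <= x -> x <= PI -> x - x^3/6 <= sin x.
Proof.
  intros h1 h2. destruct (sin_bound x 0 h1 h2) as [H _].
  unfold sin_approx, sin_term in H. simpl in H. lra.
Qed.

Lemma PI_gt3 : 3 < PI.
Proof. pose proof PI2_3_2. lra. Qed.

Lemma L1 n eta : (5 <= n)%nat -> PI / INR n < eta <= PI / 4 ->
  absa eta ^ n < (1 - absa eta ^ 4) * sin eta.
Proof.
  intros hn [h1 h2].
  pose proof PI_gt3 as hpi. pose proof PI_4 as hpi4.
  assert (hn0 : 5 <= INR n) by (replace 5 with (INR 5) by (simpl; lra); apply le_INR; lia).
  assert (hpn : 0 < PI / INR n) by (apply Rdiv_lt_0_compat; lra).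
  assert (hc : cos (PI/4) <= cos eta) by (apply cos_decr_1; lra).
  rewrite cos_PI4 in hc.
  assert (hs2 : (1 / sqrt 2)^2 = /2).
  { unfold Rdiv. rewrite Rmult_1_l, pow_inv. rewrite <- Rsqr_pow2, Rsqr_sqrt; lra. }
  assert (hsq : 0 < 1 / sqrt 2) by (apply Rdiv_lt_0_compat; [lra| apply sqrt_lt_R0; lra]).
  set (c := cos eta) in *.
  assert (hc2 : /2 <= c^2) by nra.
  assert (hcp : 0 < c) by lra.
  set (a := absa eta).
  assert (ha : a = / (2*c)) by reflexivity.
  assert (hap : 0 < a) by (rewrite ha; apply Rinv_0_lt_compat; lra).
  assert (ha2 : a^2 * (4 * c^2) = 1) by (rewrite ha; field; lra).
  assert (ha2' : a^2 <= /2) by nra.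
  pose proof (nb n a hn (Rlt_le _ _ hap) ha2') as hnb.
  assert (ha4 : a^4 <= /4). { replace (a^4) with ((a^2)^2) by ring. nra. }
  assert (hsin : eta - eta^3/6 <= sin eta) by (apply sin_lower; lra).
  assert (he1 : eta <= 1) by lra.
  assert (hsin' : 5/6 * eta <= sin eta) by nra.
  assert (hne : 3 < INR n * eta).
  { assert (PI = INR n * (PI/INR n)) by (field; lra). nra. }
  assert (0 < INR n) by lra.
  assert (hs1 : 2 < INR n * sin eta) by nra.
  assert (hfin : 1 < INR n * ((1 - a^4) * sin eta)).
  { replace (INR n * ((1 - a^4) * sin eta)) with ((1-a^4) * (INR n * sin eta)) by ring.
    nra. }
  apply Rmult_lt_reg_l with (INR n); lra.
Qed.

Lemma phi4_expand x : cos x <> 0 ->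
  Phi 4 x = sin x * (2 * (4 * cos x ^ 2 - 1) * (8 * cos x ^ 4 - 1)) / (16 * cos x ^ 4).
Proof.
  intros hc. unfold Phi, absa.
  replace (INR 4 - 1) with 3 by (simpl; lra).
  replace (INR 4 - 2) with 2 by (simpl; lra).
  replace (3 * x) with (2 * x + x) by ring.
  rewrite sin_plus, sin_2a, cos_2a_cos.
  field. auto.
Qed.

Lemma theta4_expand x : cos x <> 0 ->
  Theta 4 x = sin x * (16 * cos x ^ 4 + 4 * cos x ^ 2 - 3) / (16 * cos x ^ 4).
Proof.
  intros hc. unfold Theta, absa.
  replace (INR 4 * x) with (2 * (2 * x)) by (simpl; lra).
  rewrite sin_2a, sin_2a, cos_2a_cos. simpl (4+1)%nat.
  field. auto.
Qed.

Lemma pow_le1 a m : 0 <= a <= 1 -> a ^ m <= 1.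
Proof. intros h. induction m; simpl; nra. Qed.

Theorem lemma4p3 (k j : nat) (eta etak etak1 : R)
  (hk : (4 <= k)%nat)
  (hetak : PI / INR k < etak < PI / (INR k - 1))
  (hPhik : Phi k etak = 0)
  (hetak1 : PI / INR (k + 1) < etak1 < PI / INR k)
  (hPhik1 : Phi (k + 1) etak1 = 0)
  (heta : etak1 <= eta < etak)
  (hj : (k <= j)%nat) :
  Theta j eta > 0.
Proof.
  pose proof PI_gt3 as hpi. pose proof PI_4 as hpi4.
  assert (hk4 : 4 <= INR k) by (replace 4 with (INR 4) by (simpl; lra); apply le_INR; lia).
  assert (hkj : INR (k+1) <= INR (j+1)) by (apply le_INR; lia).
  assert (hk1 : INR (k+1) = INR k + 1) by (rewrite plus_INR; simpl; lra).
  assert (hpk1 : 0 < PI / INR (k+1)) by (apply Rdiv_lt_0_compat; lra).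
  assert (hetapos : 0 < eta) by lra.
  assert (hub : PI / (INR k - 1) <= PI / 3).
  { unfold Rdiv. apply Rmult_le_compat_l; [lra|]. apply Rinv_le_contravar; lra. }
  assert (hc0 : 0 < cos eta) by (apply cos_gt_0; lra).
  set (a := absa eta).
  assert (hap : 0 < a) by (unfold a, absa; apply Rinv_0_lt_compat; lra).
  assert (hT : Theta j eta >= (1 - a^4) * sin eta - a^(j+1)).
  { unfold Theta. fold a. pose proof (SIN_bound (INR j * eta)) as [hs _].
    assert (0 < a^(j+1)) by (apply pow_lt; lra). nra. }
  destruct (Rle_lt_dec eta (PI/4)) as [hle|hgt].
  -
    assert (hjn : PI / INR (j+1) < eta).
    { apply Rle_lt_trans with (PI / INR (k+1)); [|lra].
      unfold Rdiv. apply Rmult_le_compat_l; [lra|]. apply Rinv_le_contravar; lra. }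
    pose proof (L1 (j+1) eta ltac:(lia) (conj hjn hle)). fold a in H. lra.
  -
    assert (hk4' : k = 4%nat).
    { destruct (Nat.eq_dec k 4) as [e|ne]; [exact e|].
      assert (5 <= INR k) by (replace 5 with (INR 5) by (simpl; lra); apply le_INR; lia).
      assert (PI / (INR k - 1) <= PI / 4).
      { unfold Rdiv. apply Rmult_le_compat_l; [lra|]. apply Rinv_le_contravar; lra. }
      lra. }
    subst k.
    assert (e4 : INR 4 = 4) by (simpl; lra).
    rewrite e4 in hetak, hub.
    assert (hck : cos (PI/3) < cos etak) by (apply cos_decreasing_1; lra).
    rewrite cos_PI3 in hck.
    assert (hsk : 0 < sin etak) by (apply sin_gt_0; lra).
    rewrite phi4_expand in hPhik by lra.
    assert (hck4 : 8 * cos etak ^ 4 = 1).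
    { assert (0 < 16 * cos etak ^ 4) by (apply Rmult_lt_0_compat; [lra| apply pow_lt; lra]).
      assert (hz : sin etak * (2 * (4 * cos etak ^ 2 - 1) * (8 * cos etak ^ 4 - 1)) = 0).
      { apply (f_equal (fun t => t * (16 * cos etak ^ 4))) in hPhik.
        field_simplify in hPhik; [|lra]. lra. }
      apply Rmult_integral in hz. destruct hz as [hz|hz]; [lra|].
      apply Rmult_integral in hz. destruct hz as [hz|hz]; [|lra].
      assert (1/2 * 1/2 < cos etak ^ 2) by nra. lra. }
    assert (hce : cos etak < cos eta) by (apply cos_decreasing_1; lra).
    set (c := cos eta) in *.
    assert (hc4 : /8 < c^4).
    { assert (cos etak ^ 4 < c ^ 4) by (assert (cos etak ^2 < c^2) by nra; nra). lra. }
    assert (hs : 0 < sin eta) by (apply sin_gt_0; lra).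
    destruct (Nat.eq_dec j 4) as [ej|nj].
    + subst j. rewrite theta4_expand by (fold c; lra). fold c.
      assert (1/3 < c^2) by nra.
      apply Rlt_gt. apply Rdiv_lt_0_compat; [|nra]. apply Rmult_lt_0_compat; nra.
    + assert (hcle : c <= cos (PI/4)) by (apply cos_decr_1; lra).
      rewrite cos_PI4 in hcle.
      assert (hs2 : (1 / sqrt 2)^2 = /2).
      { unfold Rdiv. rewrite Rmult_1_l, pow_inv. rewrite <- Rsqr_pow2, Rsqr_sqrt; lra. }
      assert (c^2 <= /2) by nra.
      assert (hss : /2 <= sin eta ^ 2) by (pose proof (sin2_cos2 eta) as h2; unfold Rsqr in h2; fold c in h2; nra).
      assert (ha4 : a^4 * (16 * c^4) = 1) by (unfold a, absa; fold c; field; lra).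
      assert (ha4lt : a^4 < /2) by nra.
      assert (ha1 : a <= 1).
      { destruct (Rle_lt_dec a 1); [lra|].
        assert (1 < a^4) by (assert (1 < a^2) by nra; nra). lra. }
      set (u := a^4) in *.
      assert (hu : 0 < u < /2) by (split; [apply pow_lt; lra| lra]).
      assert (h6 : a^(j+1) <= a^6).
      { replace (j+1)%nat with (6 + (j-5))%nat by lia. rewrite pow_add.
        assert (0 < a^6) by (apply pow_lt; lra).
        pose proof (pow_le1 a (j-5) ltac:(lra)). nra. }
      assert (hu3 : a^6 * a^6 = u^3) by (unfold u; ring).
      assert (hq : u^3 < ((1-u)*sin eta)^2).
      { assert (u^3 < (1-u)^2 / 2) by nra.
        replace (((1-u)*sin eta)^2) with ((1-u)^2 * sin eta ^2) by ring. nra. }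
      assert (a^6 < (1-u) * sin eta).
      { assert (0 < a^6) by (apply pow_lt; lra).
        assert (0 < (1-u) * sin eta) by nra. nra. }
      lra.
Qed.
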